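(* Let $\mathscr{B}$ be a tensored and cotensored $\mathscr{V}$-category whose underlying ordinary category is finitely well-complete. Then $(\mathsf{Epi}_\mathscr{V}\mathscr{B},\mathsf{StrMono}_\mathscr{V}\mathscr{B})=(\mathsf{Epi}\,\mathscr{B},\mathsf{StrMono}\,\mathscr{B})$, and this pair is a $\mathscr{V}$-factorization-system on $\mathscr{B}$.
   Context: $\mathscr{V}$ is a closed symmetric monoidal category; ordinary categories are not assumed locally small. $\mathsf{Epi}_\mathscr{V}\mathscr{B}$: morphisms $e$ with $\mathscr{B}(e,C)$ mono in $\mathscr{V}$ for all $C$; $\mathscr{V}$-monos: $m$ with $\mathscr{B}(A,m)$ mono for all $A$. For $e:A_1\to A_2$, $m:B_1\to B_2$, $e\downarrow_\mathscr{V} m$ means the square formed by $\mathscr{B}(A_2,m)$, $\mathscr{B}(A_1,m)$, $\mathscr{B}(e,B_1)$, $\mathscr{B}(e,B_2)$ is a pullback in $\mathscr{V}$. $\mathsf{StrMono}_\mathscr{V}\mathscr{B}$: $\mathscr{V}$-monos $m$ with $e\downarrow_\mathscr{V} m$ for all $\mathscr{V}$-epis $e$. $\mathsf{Epi}\,\mathscr{B}$, $\mathsf{StrMono}\,\mathscr{B}$: ordinary epis and strong monos (monos with unique diagonal lifts against all epis). An ordinary category is finitely well-complete if it has finite limits and intersections (wide pullbacks) of arbitrary class-indexed families of strong monos. A $\mathscr{V}$-factorization-system is a pair $(\mathscr{E},\mathscr{M})$ such that $\mathscr{M}$ is exactly the class of $m$ with $e\downarrow_\mathscr{V} m$ for all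 $e\in\mathscr{E}$, $\mathscr{E}$ exactly the class of $e$ with $e\downarrow_\mathscr{V} m$ for all $m\in\mathscr{M}$, and every morphism is assigned a factorization $m\cdot e$ with $e\in\mathscr{E}$, $m\in\mathscr{M}$. *)

(* Defs.v *)
Set Implicit Arguments.

Record PreCat := {
  ob :> Type;
  hom : ob -> ob -> Type;
  idm : forall a, hom a a;
  cmp : forall a b c, hom b c -> hom a b -> hom a c
}.
Arguments hom {_} a b.
Arguments idm {_} a.
Arguments cmp {_ a b c} g f.
Notation "g ∘ f" := (cmp g f) (at level 40, left associativity).

Definition is_category (C : PreCat) : Prop :=
  (forall (a b : C) (f : hom a b), idm b ∘ f = f) /\
  (forall (a b : C) (f : hom a b), f ∘ idm a = f) /\
  (forall (a b c d : C) (f : hom a b) (g : hom b c) (h : hom c d),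
      h ∘ (g ∘ f) = (h ∘ g) ∘ f).

Section Notions.
Variable C : PreCat.

Definition is_mono {a b : C} (f : hom a b) : Prop :=
  forall (z : C) (g h : hom z a), f ∘ g = f ∘ h -> g = h.

Definition is_epi {a b : C} (f : hom a b) : Prop :=
  forall (z : C) (g h : hom b z), g ∘ f = h ∘ f -> g = h.

Definition is_iso {a b : C} (f : hom a b) : Prop :=
  exists g : hom b a, g ∘ f = idm a /\ f ∘ g = idm b.

Definition is_strong_mono {a b : C} (m : hom a b) : Prop :=
  is_mono m /\
  forall (x y : C) (e : hom x y), is_epi e ->
  forall (u : hom x a) (v : hom y b), m ∘ u = v ∘ e ->
  exists! d : hom y a, d ∘ e = u /\ m ∘ d = v.

Definition is_pullback {x y z p : C} (f : hom x z) (g : hom y z)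
    (p1 : hom p x) (p2 : hom p y) : Prop :=
  f ∘ p1 = g ∘ p2 /\
  forall (q : C) (q1 : hom q x) (q2 : hom q y), f ∘ q1 = g ∘ q2 ->
  exists! u : hom q p, p1 ∘ u = q1 /\ p2 ∘ u = q2.

Definition is_terminal (t : C) : Prop :=
  forall a : C, exists! f : hom a t, True.

Definition has_pullbacks : Prop :=
  forall (x y z : C) (f : hom x z) (g : hom y z),
  exists (p : C) (p1 : hom p x) (p2 : hom p y), is_pullback f g p1 p2.

Definition has_finite_limits : Prop :=
  (exists t : C, is_terminal t) /\ has_pullbacks.

Definition is_intersection {I : Type} {a : C} (b : I -> C)
    (m : forall i, hom (b i) a) (p : C) (pa : hom p a)
    (pi : forall i, hom p (b i)) : Prop :=
  (forall i, m i ∘ pi i = pa) /\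
  forall (q : C) (qa : hom q a) (qi : forall i, hom q (b i)),
    (forall i, m i ∘ qi i = qa) ->
    exists! u : hom q p, pa ∘ u = qa /\ forall i, pi i ∘ u = qi i.

Definition has_strong_mono_intersections : Prop :=
  forall (I : Type) (a : C) (b : I -> C) (m : forall i, hom (b i) a),
    (forall i, is_strong_mono (m i)) ->
    exists (p : C) (pa : hom p a) (pi : forall i, hom p (b i)),
      @is_intersection I a b m p pa pi.

Definition finitely_well_complete : Prop :=
  has_finite_limits /\ has_strong_mono_intersections.

End Notions.
Arguments is_mono {C a b} f.
Arguments is_epi {C a b} f.
Arguments is_iso {C a b} f.
Arguments is_strong_mono {C a b} m.
Arguments is_pullback {C x y z p} f g p1 p2.

Record SMCC := {
  V :> PreCat;
  V_cat : is_category V;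
  tens : V -> V -> V;
  tensm : forall a a' b b' : V, hom a a' -> hom b b' -> hom (tens a b) (tens a' b');
  tensm_id : forall a b : V, tensm _ _ _ _ (idm a) (idm b) = idm (tens a b);
  tensm_comp : forall (a a' a'' b b' b'' : V) (f : hom a a') (f' : hom a' a'')
      (g : hom b b') (g' : hom b' b''),
      tensm _ _ _ _ (f' ∘ f) (g' ∘ g) = tensm _ _ _ _ f' g' ∘ tensm _ _ _ _ f g;
  unit : V;
  asc : forall a b c : V, hom (tens (tens a b) c) (tens a (tens b c));
  asc_iso : forall a b c : V, is_iso (asc a b c);
  asc_nat : forall (a a' b b' c c' : V) (f : hom a a') (g : hom b b') (h : hom c c'),
      asc a' b' c' ∘ tensm _ _ _ _ (tensm _ _ _ _ f g) h = tensm _ _ _ _ f (tensm _ _ _ _ g h) ∘ asc a b c;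
  lu : forall a : V, hom (tens unit a) a;
  lu_inv : forall a : V, hom a (tens unit a);
  lu_inv_l : forall a : V, lu_inv a ∘ lu a = idm (tens unit a);
  lu_inv_r : forall a : V, lu a ∘ lu_inv a = idm a;
  lu_nat : forall (a b : V) (f : hom a b), f ∘ lu a = lu b ∘ tensm _ _ _ _ (idm unit) f;
  ru : forall a : V, hom (tens a unit) a;
  ru_inv : forall a : V, hom a (tens a unit);
  ru_inv_l : forall a : V, ru_inv a ∘ ru a = idm (tens a unit);
  ru_inv_r : forall a : V, ru a ∘ ru_inv a = idm a;
  ru_nat : forall (a b : V) (f : hom a b), f ∘ ru a = ru b ∘ tensm _ _ _ _ f (idm unit);
  triangle : forall a b : V,
      tensm _ _ _ _ (ru a) (idm b) = tensm _ _ _ _ (idm a) (lu b) ∘ asc a unit b;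
  pentagon : forall a b c d : V,
      asc a b (tens c d) ∘ asc (tens a b) c d
      = tensm _ _ _ _ (idm a) (asc b c d) ∘ asc a (tens b c) d ∘ tensm _ _ _ _ (asc a b c) (idm d);
  sym : forall a b : V, hom (tens a b) (tens b a);
  sym_nat : forall (a a' b b' : V) (f : hom a a') (g : hom b b'),
      sym a' b' ∘ tensm _ _ _ _ f g = tensm _ _ _ _ g f ∘ sym a b;
  sym_invol : forall a b : V, sym b a ∘ sym a b = idm (tens a b);
  hexagon : forall a b c : V,
      asc b c a ∘ sym a (tens b c) ∘ asc a b c
      = tensm _ _ _ _ (idm b) (sym a c) ∘ asc b a c ∘ tensm _ _ _ _ (sym a b) (idm c);
  ihom : V -> V -> V;
  ev : forall y z : V, hom (tens (ihom y z) y) z;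
  curry : forall x y z : V, hom (tens x y) z -> hom x (ihom y z);
  curry_ev : forall (x y z : V) (f : hom (tens x y) z),
      ev y z ∘ tensm _ _ _ _ (curry _ _ _ f) (idm y) = f;
  curry_uniq : forall (x y z : V) (f : hom (tens x y) z) (g : hom x (ihom y z)),
      ev y z ∘ tensm _ _ _ _ g (idm y) = f -> g = curry _ _ _ f
}.
Arguments tens {_} a b.
Arguments tensm {_ a a' b b'} f g.
Arguments unit {_}.
Arguments asc {_} a b c.
Arguments lu {_} a.
Arguments lu_inv {_} a.
Arguments ru {_} a.
Arguments ru_inv {_} a.
Arguments sym {_} a b.
Arguments ihom {_} y z.
Arguments ev {_} y z.
Arguments curry {_ x y z} f.

Record VCat (W : SMCC) := {
  vob :> Type;
  vhom : vob -> vob -> ob W;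
  vcomp : forall a b c : vob, hom (tens (vhom b c) (vhom a b)) (vhom a c);
  vid : forall a : vob, hom unit (vhom a a);
  vassoc : forall a b c d : vob,
      vcomp a b d ∘ tensm (vcomp b c d) (idm (vhom a b))
      = vcomp a c d ∘ tensm (idm (vhom c d)) (vcomp a b c)
        ∘ asc (vhom c d) (vhom b c) (vhom a b);
  vunit_l : forall a b : vob,
      vcomp a b b ∘ tensm (vid b) (idm (vhom a b)) = lu (vhom a b);
  vunit_r : forall a b : vob,
      vcomp a a b ∘ tensm (idm (vhom a b)) (vid a) = ru (vhom a b)
}.
Arguments vhom {_} _ a b.
Arguments vcomp {_} _ a b c.
Arguments vid {_} _ a.

Section Enriched.
Variables (W : SMCC) (B : VCat W).

Definition B0 : PreCat := {|
  ob := vob B;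
  hom a b := hom (unit : ob W) (vhom B a b);
  idm a := vid B a;
  cmp a b c g f := vcomp B a b c ∘ tensm g f ∘ lu_inv (unit : ob W)
|}.

Definition precomp {a1 a2 : vob B} (e : @hom B0 a1 a2) (c : vob B)
  : hom (vhom B a2 c) (vhom B a1 c) :=
  vcomp B a1 a2 c ∘ tensm (idm (vhom B a2 c)) e ∘ ru_inv (vhom B a2 c).

Definition postcomp (a : vob B) {b1 b2 : vob B} (m : @hom B0 b1 b2)
  : hom (vhom B a b1) (vhom B a b2) :=
  vcomp B a b1 b2 ∘ tensm m (idm (vhom B a b1)) ∘ lu_inv (vhom B a b1).

Definition orthV {a1 a2 b1 b2 : vob B} (e : @hom B0 a1 a2) (m : @hom B0 b1 b2)
  : Prop :=
  is_pullback (precomp e b2) (postcomp a1 m) (postcomp a2 m) (precomp e b1).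

Definition MorClass := forall a b : vob B, @hom B0 a b -> Prop.

Definition VEpi : MorClass :=
  fun a b e => forall c : vob B, is_mono (precomp e c).

Definition VMono : MorClass :=
  fun b1 b2 m => forall a : vob B, is_mono (postcomp a m).

Definition VStrMono : MorClass :=
  fun b1 b2 m => VMono b1 b2 m /\
    forall (a1 a2 : vob B) (e : @hom B0 a1 a2), VEpi a1 a2 e -> orthV e m.

Definition Epi0 : MorClass := fun a b f => @is_epi B0 a b f.
Definition StrMono0 : MorClass := fun a b f => @is_strong_mono B0 a b f.

Definition VFactSystem (E M : MorClass) : Prop :=
  (forall (b1 b2 : vob B) (m : @hom B0 b1 b2),
      M b1 b2 m <-> forall (a1 a2 : vob B) (e : @hom B0 a1 a2), E a1 a2 e -> orthV e m) /\
  (forall (a1 a2 : vob B) (e : @hom B0 a1 a2),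
      E a1 a2 e <-> forall (b1 b2 : vob B) (m : @hom B0 b1 b2), M b1 b2 m -> orthV e m) /\
  (forall (a b : vob B) (f : @hom B0 a b),
      exists (c : vob B) (e : @hom B0 a c) (m : @hom B0 c b),
        E a c e /\ M c b m /\ f = m ∘ e).

(* tensor X ⊗ A given by a unit eta : X -> B(A, X⊗A) inducing isomorphisms
   B(X⊗A, C) ≅ [X, B(A, C)] *)
Definition is_tensor (x : ob W) (a t : vob B) (eta : hom x (vhom B a t)) : Prop :=
  forall c : vob B,
    is_iso (curry (vcomp B a t c ∘ tensm (idm (vhom B t c)) eta)).

(* cotensor [X, A] given by a counit eps : X -> B([X,A], A) inducing
   isomorphisms B(C, [X,A]) ≅ [X, B(C, A)] *)
Definition is_cotensor (x : ob W) (a k : vob B) (eps : hom x (vhom B k a)) : Prop :=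
  forall c : vob B,
    is_iso (curry (vcomp B c k a ∘ sym (vhom B c k) (vhom B k a)
                   ∘ tensm (idm (vhom B c k)) eps)).

Definition tensored : Prop :=
  forall (x : ob W) (a : vob B), exists (t : vob B) (eta : hom x (vhom B a t)),
    @is_tensor x a t eta.

Definition cotensored : Prop :=
  forall (x : ob W) (a : vob B), exists (k : vob B) (eps : hom x (vhom B k a)),
    @is_cotensor x a k eps.

End Enriched.

(* Main.v *)
Require Import Defs.
From Stdlib Require Import IndefiniteDescription.
Set Implicit Arguments.

Lemma cA' {W : SMCC} {a b c d : W} (f : hom a b) (g : hom b c) (h : hom c d) :
  h ∘ g ∘ f = h ∘ (g ∘ f).
Proof. symmetry. apply (proj2 (proj2 (V_cat W))). Qed.
Lemma idl {W : SMCC} {a b : W} (f : hom a b) : idm b ∘ f = f.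
Proof. apply (proj1 (V_cat W)). Qed.
Lemma idr {W : SMCC} {a b : W} (f : hom a b) : f ∘ idm a = f.
Proof. apply (proj1 (proj2 (V_cat W))). Qed.

Lemma sfx2 {W : SMCC} {x y z : W} {a : hom y z} {b : hom x y} {c : hom x z} :
  a ∘ b = c -> forall w (k : hom w x), a ∘ (b ∘ k) = c ∘ k.
Proof. intros E w k. rewrite <- cA', E. reflexivity. Qed.
Lemma sfx3 {W : SMCC} {x y z u : W} {a : hom z u} {b : hom y z} {c : hom x y} {d : hom x u} :
  a ∘ (b ∘ c) = d -> forall w (k : hom w x), a ∘ (b ∘ (c ∘ k)) = d ∘ k.
Proof. intros E w k. rewrite <- (cA' k c b), <- cA', E. reflexivity. Qed.
Lemma sfx4 {W : SMCC} {x y z u v : W} {a : hom u v} {b : hom z u} {c : hom y z} {e : hom x y} {d : hom x v} :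
  a ∘ (b ∘ (c ∘ e)) = d -> forall w (k : hom w x), a ∘ (b ∘ (c ∘ (e ∘ k))) = d ∘ k.
Proof. intros E w k. rewrite <- (cA' k e c), <- (cA' k (c ∘ e) b), <- cA', E. reflexivity. Qed.

Ltac rassoc := repeat rewrite cA'; repeat rewrite idl; repeat rewrite idr.
Ltac rw E := rassoc; first [rewrite (sfx4 E) | rewrite (sfx3 E) | rewrite (sfx2 E) | rewrite E]; rassoc.
Ltac rwl E := rw (eq_sym E).

Section Mon.
Context {W : SMCC}.

Lemma tm_id (a b : W) : tensm (idm a) (idm b) = idm (tens a b).
Proof. apply tensm_id. Qed.

Lemma tm_c {a a' a'' b b' b'' : W} (f : hom a a') (f' : hom a' a'') (g : hom b b') (g' : hom b' b'') :
  tensm f' g' ∘ tensm f g = tensm (f' ∘ f) (g' ∘ g).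
Proof. symmetry; apply tensm_comp. Qed.

Lemma tm_split {a a' b b' : W} (f : hom a a') (g : hom b b') :
  tensm f g = tensm f (idm b') ∘ tensm (idm a) g.
Proof. rewrite tm_c, idl, idr. reflexivity. Qed.
Lemma tm_split' {a a' b b' : W} (f : hom a a') (g : hom b b') :
  tensm f g = tensm (idm a') g ∘ tensm f (idm b).
Proof. rewrite tm_c, idl, idr. reflexivity. Qed.
Lemma tm_l {a a' a'' b : W} (f : hom a a') (f' : hom a' a'') :
  tensm f' (idm b) ∘ tensm f (idm b) = tensm (f' ∘ f) (idm b).
Proof. rewrite tm_c, idl. reflexivity. Qed.
Lemma tm_r {a b b' b'' : W} (g : hom b b') (g' : hom b' b'') :
  tensm (idm a) g' ∘ tensm (idm a) g = tensm (idm a) (g' ∘ g).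
Proof. rewrite tm_c, idl. reflexivity. Qed.
Lemma tm_lr {a a' b b' : W} (f : hom a a') (g : hom b b') :
  tensm f (idm b') ∘ tensm (idm a) g = tensm f g.
Proof. rewrite tm_c, idl, idr. reflexivity. Qed.
Lemma tm_rl {a a' b b' : W} (f : hom a a') (g : hom b b') :
  tensm (idm a') g ∘ tensm f (idm b) = tensm f g.
Proof. rewrite tm_c, idl, idr. reflexivity. Qed.

Lemma luK (a : W) : lu a ∘ lu_inv a = idm a. Proof. apply lu_inv_r. Qed.
Lemma luK' (a : W) : lu_inv a ∘ lu a = idm _. Proof. apply lu_inv_l. Qed.
Lemma ruK (a : W) : ru a ∘ ru_inv a = idm a. Proof. apply ru_inv_r. Qed.
Lemma ruK' (a : W) : ru_inv a ∘ ru a = idm _. Proof. apply ru_inv_l. Qed.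

Lemma lu_n {a b : W} (f : hom a b) : lu b ∘ tensm (idm unit) f = f ∘ lu a.
Proof. symmetry; apply lu_nat. Qed.
Lemma ru_n {a b : W} (f : hom a b) : ru b ∘ tensm f (idm unit) = f ∘ ru a.
Proof. symmetry; apply ru_nat. Qed.

Lemma lui_n {a b : W} (f : hom a b) : lu_inv b ∘ f = tensm (idm unit) f ∘ lu_inv a.
Proof.
  rewrite <- (idr (lu_inv b ∘ f)), <- (luK a). rassoc.
  rewrite <- (cA' (lu_inv a) (lu a) f), <- lu_n. rassoc. rewrite (sfx2 (luK' b)). rassoc. reflexivity.
Qed.
Lemma rui_n {a b : W} (f : hom a b) : ru_inv b ∘ f = tensm f (idm unit) ∘ ru_inv a.
Proof.
  rewrite <- (idr (ru_inv b ∘ f)), <- (ruK a). rassoc.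
  rewrite <- (cA' (ru_inv a) (ru a) f), <- ru_n. rassoc. rewrite (sfx2 (ruK' b)). rassoc. reflexivity.
Qed.

Definition monic {a b : W} (f : hom a b) := forall z (g h : hom z a), f ∘ g = f ∘ h -> g = h.
Definition epic {a b : W} (f : hom a b) := forall z (g h : hom b z), g ∘ f = h ∘ f -> g = h.

Lemma retr_monic {a b : W} (f : hom a b) (r : hom b a) : r ∘ f = idm a -> monic f.
Proof. intros E z g h H. rewrite <- (idl g), <- (idl h), <- E, !cA', H. reflexivity. Qed.
Lemma sect_epic {a b : W} (f : hom a b) (s : hom b a) : f ∘ s = idm b -> epic f.
Proof. intros E z g h H. rewrite <- (idr g), <- (idr h), <- E, <- !cA', H. reflexivity. Qed.

Lemma iso_monic {a b : W} (f : hom a b) : is_iso f -> monic f.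
Proof. intros [g [E1 E2]]. exact (retr_monic _ _ E1). Qed.
Lemma iso_epic {a b : W} (f : hom a b) : is_iso f -> epic f.
Proof. intros [g [E1 E2]]. exact (sect_epic _ _ E2). Qed.

Lemma tm_iso {a a' b b' : W} (f : hom a a') (g : hom b b') : is_iso f -> is_iso g -> is_iso (tensm f g).
Proof.
  intros [f' [F1 F2]] [g' [G1 G2]]. exists (tensm f' g'). rewrite !tm_c, F1, F2, G1, G2, !tm_id. split; reflexivity.
Qed.
Lemma id_iso (a : W) : is_iso (idm a).
Proof. exists (idm a). rewrite idl. split; reflexivity. Qed.
Lemma lu_iso (a : W) : is_iso (lu a).
Proof. exists (lu_inv a). split; [apply luK' | apply luK]. Qed.
Lemma ru_iso (a : W) : is_iso (ru a).
Proof. exists (ru_inv a). split; [apply ruK' | apply ruK]. Qed.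
Lemma comp_iso {a b c : W} (f : hom a b) (g : hom b c) : is_iso f -> is_iso g -> is_iso (g ∘ f).
Proof.
  intros [f' [F1 F2]] [g' [G1 G2]]. exists (f' ∘ g'). split.
  - rassoc. rewrite (sfx2 G1). rassoc. exact F1.
  - rassoc. rewrite (sfx2 F2). rassoc. exact G2.
Qed.

Lemma canc_lu {a b : W} (f g : hom a b) : tensm (idm unit) f = tensm (idm unit) g -> f = g.
Proof.
  intro H. apply (iso_epic (lu_iso a)). rewrite <- !lu_n, H. reflexivity.
Qed.
Lemma canc_ru {a b : W} (f g : hom a b) : tensm f (idm unit) = tensm g (idm unit) -> f = g.
Proof.
  intro H. apply (iso_epic (ru_iso a)). rewrite <- !ru_n, H. reflexivity.
Qed.

Lemma asc_n {a a' b b' c c' : W} (f : hom a a') (g : hom b b') (h : hom c c') :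
  asc a' b' c' ∘ tensm (tensm f g) h = tensm f (tensm g h) ∘ asc a b c.
Proof. apply asc_nat. Qed.

Lemma K1 (a b : W) : lu (tens a b) ∘ asc unit a b = tensm (lu a) (idm b).
Proof.
  apply canc_lu.
  assert (HI : is_iso (asc unit (tens unit a) b ∘ tensm (asc unit unit a) (idm b))).
  { apply comp_iso; [apply tm_iso; [apply asc_iso | apply id_iso] | apply asc_iso]. }
  apply (iso_epic HI). rassoc.
  rewrite <- tm_r. rassoc.
  assert (P := pentagon W unit unit a b). rewrite ?cA' in P.
  rewrite <- P.
  assert (T := triangle W unit (tens a b)). rewrite (sfx2 (eq_sym T)).
  rewrite <- (tm_id a b), <- asc_n.
  assert (T2 := triangle W unit a). rewrite T2, <- tm_l. rassoc.
  rewrite (sfx2 (asc_n _ _ _)). rassoc. reflexivity.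
Qed.

Lemma KI : lu (unit : W) = ru unit.
Proof.
  assert (E1 : tensm (idm unit) (lu (unit:W)) = lu (tens unit unit)).
  { apply (iso_monic (lu_iso unit)). rewrite lu_n. reflexivity. }
  assert (E2 := K1 unit unit). rewrite <- E1 in E2.
  assert (T := triangle W unit unit). rewrite E2 in T.
  apply canc_ru. symmetry. exact T.
Qed.

Lemma sym_iso (a b : W) : is_iso (sym a b).
Proof. exists (sym b a). split; apply sym_invol. Qed.

Lemma sym_n {a a' b b' : W} (f : hom a a') (g : hom b b') :
  sym a' b' ∘ tensm f g = tensm g f ∘ sym a b.
Proof. apply sym_nat. Qed.

Lemma S1 (a : W) : lu a ∘ sym a unit = ru a.
Proof.
  apply canc_ru. apply (iso_monic (sym_iso a unit)).
  transitivity (lu (tens unit a) ∘ (tensm (idm unit) (sym a unit) ∘ (asc unit a unit ∘ tensm (sym a unit) (idm unit)))).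
  { rewrite (sfx2 (lu_n _)). rw (K1 a unit). rewrite tm_l. reflexivity. }
  assert (H := hexagon W a unit unit). rewrite ?cA' in H. rewrite <- H.
  rw (K1 unit a). rewrite (sfx2 (eq_sym (sym_n (idm a) (lu unit)))).
  assert (T := triangle W a unit). rewrite ?cA' in T. rassoc. rewrite <- T. reflexivity.
Qed.

Lemma S1' (a : W) : sym unit a ∘ lu_inv a = ru_inv a.
Proof.
  apply (iso_monic (ru_iso a)). rewrite ruK, <- S1. rassoc.
  rewrite (sfx2 (sym_invol W unit a)). rassoc. apply luK.
Qed.

Lemma KI' : lu_inv (unit : W) = ru_inv unit.
Proof.
  apply (iso_monic (ru_iso unit)). rewrite ruK, <- KI. apply luK.
Qed.

Lemma C1 (X : W) : asc unit X unit ∘ (ru_inv (tens unit X) ∘ lu_inv X) = lu_inv (tens X unit) ∘ ru_inv X.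
Proof.
  apply (iso_monic (lu_iso (tens X unit))). rw (K1 X unit). rwl (rui_n (lu X)). rw (luK X).
  rw (luK (tens X unit)). reflexivity.
Qed.

Lemma C2 (X : W) : asc unit unit X ∘ (tensm (lu_inv unit) (idm X) ∘ lu_inv X) = lu_inv (tens unit X) ∘ lu_inv X.
Proof.
  apply (iso_monic (lu_iso (tens unit X))). rw (K1 unit X). rw (tm_l (lu_inv unit) (lu unit) (b:=X)).
  rewrite luK, tm_id. rassoc. rw (luK (tens unit X)). reflexivity.
Qed.

Lemma C3 (X : W) : asc X unit unit ∘ (ru_inv (tens X unit) ∘ ru_inv X) = tensm (idm X) (lu_inv unit) ∘ ru_inv X.
Proof.
  apply (iso_monic (tm_iso (id_iso X) (lu_iso unit))).
  assert (T := triangle W X unit). rewrite ?cA' in T. rewrite (sfx2 (eq_sym T)).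
  rw (rui_n (ru_inv X)). rw (tm_l (ru_inv X) (ru X) (b:=unit)). rewrite ruK, tm_id. rassoc.
  rewrite (sfx2 (tm_r _ _)). rewrite luK, tm_id. rassoc. reflexivity.
Qed.
End Mon.
Set Implicit Arguments.

Section Enr.
Variables (W : SMCC) (B : VCat W).
Lemma tm_xch {a a' b b' : W} (f : hom a a') (g : hom b b') :
  tensm f (idm b') ∘ tensm (idm a) g = tensm (idm a') g ∘ tensm f (idm b).
Proof. rewrite tm_lr, tm_rl. reflexivity. Qed.

Lemma P1 (a b1 b2 b3 : B) (d : @hom (B0 B) b1 b2) (m : @hom (B0 B) b2 b3) :
  postcomp B a (m ∘ d) = postcomp B a m ∘ postcomp B a d.
Proof.
  unfold postcomp; simpl.
  rewrite <- !tm_l. rassoc.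
  assert (VA := vassoc B a b1 b2 b3). rewrite ?cA' in VA.
  rw VA. rw (asc_n m d (idm (vhom B a b1))). rw (C2 (vhom B a b1)).
  rw (lui_n (vcomp B a b1 b2)). rw (lui_n (tensm d (idm (vhom B a b1)))).
  rewrite (tm_split m). rassoc. rw (tm_xch m (vcomp B a b1 b2)).
  reflexivity.
Qed.

Lemma P2 (a b1 b2 : B) (m : @hom (B0 B) b1 b2) (g : @hom (B0 B) a b1) :
  postcomp B a m ∘ g = @cmp (B0 B) a b1 b2 m g.
Proof.
  unfold postcomp; simpl. rw (lui_n g). rw (tm_lr m g). reflexivity.
Qed.

Lemma P3 (a1 a2 c : B) (e : @hom (B0 B) a1 a2) (g : @hom (B0 B) a2 c) :
  precomp B e c ∘ g = @cmp (B0 B) a1 a2 c g e.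
Proof.
  unfold precomp; simpl. rw (rui_n g). rw (tm_rl g e). rewrite KI'. reflexivity.
Qed.

Lemma P4 (c' c k a : B) (e : @hom (B0 B) c' c) (d : @hom (B0 B) c k) :
  precomp B e a ∘ precomp B d a = precomp B (@cmp (B0 B) _ _ _ d e) a.
Proof.
  unfold precomp; simpl.
  rw (rui_n (vcomp B c k a)). rw (rui_n (tensm (idm (vhom B k a)) d)).
  rwl (tm_xch (vcomp B c k a) e). rw (tm_rl (tensm (idm (vhom B k a)) d) e).
  assert (VA := vassoc B c' c k a). rewrite ?cA' in VA.
  rw VA. rw (asc_n (idm (vhom B k a)) d e). rw (C3 (vhom B k a)).
  rewrite <- !tm_r. rassoc. reflexivity.
Qed.

Lemma P5 (a1 a2 b1 b2 : B) (e : @hom (B0 B) a1 a2) (m : @hom (B0 B) b1 b2) :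
  postcomp B a1 m ∘ precomp B e b1 = precomp B e b2 ∘ postcomp B a2 m.
Proof.
  unfold precomp, postcomp; simpl.
  rw (lui_n (vcomp B a1 a2 b1)). rw (lui_n (tensm (idm (vhom B a2 b1)) e)).
  rw (tm_xch m (vcomp B a1 a2 b1)).
  rw (rui_n (vcomp B a2 b1 b2)). rw (rui_n (tensm m (idm (vhom B a2 b1)))).
  rw (tm_rl (vcomp B a2 b1 b2) e).
  rewrite (tm_split (vcomp B a2 b1 b2) e). rassoc.
  assert (VA := vassoc B a1 a2 b1 b2). rewrite ?cA' in VA.
  rw VA. rw (tm_rl (tensm m (idm (vhom B a2 b1))) e).
  rw (asc_n m (idm (vhom B a2 b1)) e). rw (C1 (vhom B a2 b1)).
  rw (tm_lr m (tensm (idm (vhom B a2 b1)) e)). reflexivity.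
Qed.

Lemma U1 (a b : B) : postcomp B a (@idm (B0 B) b) = idm _.
Proof. unfold postcomp; simpl. rewrite (vunit_l B a b). rassoc. apply luK. Qed.
Lemma U2 (a c : B) : precomp B (@idm (B0 B) a) c = idm _.
Proof. unfold precomp; simpl. rewrite (vunit_r B a c). rassoc. apply ruK. Qed.

Lemma B0_cat : is_category (B0 B).
Proof.
  split; [|split].
  - intros a b f. rewrite <- P2, U1. apply idl.
  - intros a b f. rewrite <- P3, U2. apply idl.
  - intros a b c d f g h.
    rewrite <- (P2 _ _ _ h (@cmp (B0 B) _ _ _ g f)), <- (P2 _ _ _ g f).
    rewrite <- (P2 _ _ _ (@cmp (B0 B) _ _ _ h g) f), P1. rassoc. reflexivity.
Qed.
End Enr.
Set Implicit Arguments.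

Section Bij.
Context {W : SMCC}.
Lemma bij_inj {Z x Y : W} (j : hom Z (ihom x Y)) (d1 d2 : hom unit Z) : is_iso j ->
  ev x Y ∘ tensm (j ∘ d1) (idm x) ∘ lu_inv x = ev x Y ∘ tensm (j ∘ d2) (idm x) ∘ lu_inv x -> d1 = d2.
Proof.
  intros Hj H. apply (iso_monic Hj).
  assert (H' : ev x Y ∘ tensm (j ∘ d1) (idm x) = ev x Y ∘ tensm (j ∘ d2) (idm x)).
  { assert (Hl : is_iso (lu_inv x)) by (exists (lu x); split; [apply luK | apply luK']).
    apply (iso_epic Hl). exact H. }
  rewrite (curry_uniq _ _ _ _ (j ∘ d1) H'). symmetry. apply curry_uniq. reflexivity.
Qed.
Lemma bij_surj {Z x Y : W} (j : hom Z (ihom x Y)) (g : hom x Y) : is_iso j ->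
  exists d : hom unit Z, ev x Y ∘ tensm (j ∘ d) (idm x) ∘ lu_inv x = g.
Proof.
  intros [j' [J1 J2]]. exists (j' ∘ curry (g ∘ lu x)).
  rassoc. rewrite <- (cA' (curry (g ∘ lu x)) j' j), J2, idl.
  rewrite (sfx2 (curry_ev _ _ _ _ _)). rassoc. rewrite luK. apply idr.
Qed.
End Bij.

Section Enr2.
Variables (W : SMCC) (B : VCat W).

Lemma tens_form (x : W) (a t c : B) (eta : hom x (vhom B a t)) (d : @hom (B0 B) t c) :
  ev x (vhom B a c) ∘ tensm (curry (vcomp B a t c ∘ tensm (idm (vhom B t c)) eta) ∘ d) (idm x) ∘ lu_inv x
  = postcomp B a d ∘ eta.
Proof.
  unfold postcomp. rewrite <- tm_l. rassoc. rewrite (sfx2 (curry_ev _ _ _ _ _)). rassoc.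
  rw (tm_rl d eta). rewrite tm_split. rassoc. rwl (lui_n eta). reflexivity.
Qed.

Lemma cot_form (x : W) (a k c : B) (eps : hom x (vhom B k a)) (d : @hom (B0 B) c k) :
  ev x (vhom B c a) ∘ tensm (curry (vcomp B c k a ∘ sym (vhom B c k) (vhom B k a)
                   ∘ tensm (idm (vhom B c k)) eps) ∘ d) (idm x) ∘ lu_inv x
  = precomp B d a ∘ eps.
Proof.
  unfold precomp. rewrite <- tm_l. rassoc. rewrite (sfx2 (curry_ev _ _ _ _ _)). rassoc.
  rw (tm_rl d eps). rw (sym_n d eps). rw (S1' x). rewrite tm_split'. rassoc.
  rwl (rui_n eps). reflexivity.
Qed.

Lemma tens_inj (x : W) (a t : B) (eta : hom x (vhom B a t)) (c : B) (d1 d2 : @hom (B0 B) t c) :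
  is_tensor B x a t eta -> postcomp B a d1 ∘ eta = postcomp B a d2 ∘ eta -> d1 = d2.
Proof.
  intros Ht H. rewrite <- !tens_form in H. exact (bij_inj _ _ (Ht c) H).
Qed.
Lemma tens_surj (x : W) (a t : B) (eta : hom x (vhom B a t)) (c : B) (g : hom x (vhom B a c)) :
  is_tensor B x a t eta -> exists d : @hom (B0 B) t c, postcomp B a d ∘ eta = g.
Proof.
  intros Ht. destruct (bij_surj g (Ht c)) as [d Hd]. exists d. rewrite <- tens_form. exact Hd.
Qed.
Lemma cot_inj (x : W) (a k : B) (eps : hom x (vhom B k a)) (c : B) (d1 d2 : @hom (B0 B) c k) :
  is_cotensor B x a k eps -> precomp B d1 a ∘ eps = precomp B d2 a ∘ eps -> d1 = d2.
Proof.
  intros Ht H. rewrite <- !cot_form in H. exact (bij_inj _ _ (Ht c) H).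
Qed.
Lemma cot_surj (x : W) (a k : B) (eps : hom x (vhom B k a)) (c : B) (g : hom x (vhom B c a)) :
  is_cotensor B x a k eps -> exists d : @hom (B0 B) c k, precomp B d a ∘ eps = g.
Proof.
  intros Ht. destruct (bij_surj g (Ht c)) as [d Hd]. exists d. rewrite <- cot_form. exact Hd.
Qed.
End Enr2.
Set Implicit Arguments.

Section Enr3.
Variables (W : SMCC) (B : VCat W).

Lemma VEpi_of_epi (Hcot : cotensored B) (a1 a2 : B) (e : @hom (B0 B) a1 a2) :
  @is_epi (B0 B) _ _ e -> VEpi B a1 a2 e.
Proof.
  intros He c z g h H. destruct (Hcot z c) as [k [eps Hk]].
  destruct (cot_surj _ g Hk) as [d1 E1]. destruct (cot_surj _ h Hk) as [d2 E2].
  subst g h. rewrite <- !cA', !P4 in H.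
  apply (cot_inj _ _ _ Hk) in H. apply He in H. subst. reflexivity.
Qed.

Lemma epi_of_VEpi (a1 a2 : B) (e : @hom (B0 B) a1 a2) :
  VEpi B a1 a2 e -> @is_epi (B0 B) _ _ e.
Proof.
  intros He z g h H. rewrite <- !P3 in H. exact (He z _ g h H).
Qed.

Lemma VMono_of_mono (Htens : tensored B) (b1 b2 : B) (m : @hom (B0 B) b1 b2) :
  @is_mono (B0 B) _ _ m -> VMono B b1 b2 m.
Proof.
  intros Hm a z g h H. destruct (Htens z a) as [t [eta Ht]].
  destruct (tens_surj _ g Ht) as [d1 E1]. destruct (tens_surj _ h Ht) as [d2 E2].
  subst g h. rewrite <- !cA', <- !P1 in H.
  apply (tens_inj _ _ _ Ht) in H. apply Hm in H. subst. reflexivity.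
Qed.

Lemma mono_of_VMono (b1 b2 : B) (m : @hom (B0 B) b1 b2) :
  VMono B b1 b2 m -> @is_mono (B0 B) _ _ m.
Proof.
  intros Hm z g h H. rewrite <- !P2 in H. exact (Hm z _ g h H).
Qed.

Definition lifts {a1 a2 b1 b2 : B} (e : @hom (B0 B) a1 a2) (m : @hom (B0 B) b1 b2) : Prop :=
  forall (u : @hom (B0 B) a1 b1) (v : @hom (B0 B) a2 b2), m ∘ u = v ∘ e ->
  exists! d : @hom (B0 B) a2 b1, d ∘ e = u /\ m ∘ d = v.

Lemma orth_lift {a1 a2 b1 b2 : B} (e : @hom (B0 B) a1 a2) (m : @hom (B0 B) b1 b2) :
  orthV B e m -> lifts e m.
Proof.
  intros [_ Hpb] u v H.
  assert (H' : precomp B e b2 ∘ v = postcomp B a1 m ∘ u) by (rewrite P2, P3; symmetry; exact H).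
  destruct (Hpb _ v u H') as [w [[W1 W2] Wu]].
  exists w. rewrite P2 in W1. rewrite P3 in W2. split; [split; assumption|].
  intros d [D1 D2]. apply Wu. rewrite P2, P3. split; assumption.
Qed.

Lemma orth_of_strong (Htens : tensored B) {a1 a2 b1 b2 : B} (e : @hom (B0 B) a1 a2) (m : @hom (B0 B) b1 b2) :
  VEpi B a1 a2 e -> @is_strong_mono (B0 B) _ _ m -> orthV B e m.
Proof.
  intros He [Hm Hl]. split.
  { symmetry. apply P5. }
  intros Q q1 q2 Hq.
  destruct (Htens Q a2) as [t2 [eta2 Ht2]]. destruct (Htens Q a1) as [t1 [eta1 Ht1]].
  destruct (tens_surj _ q1 Ht2) as [d1 E1]. destruct (tens_surj _ q2 Ht1) as [d2 E2].
  destruct (tens_surj _ (precomp B e t2 ∘ eta2) Ht1) as [k Ek].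
  assert (key : forall z (x : @hom (B0 B) t2 z),
     postcomp B a1 (x ∘ k) ∘ eta1 = precomp B e z ∘ (postcomp B a2 x ∘ eta2)).
  { intros z x. rewrite P1, cA', Ek, <- cA', P5, cA'. reflexivity. }
  assert (Hk : @is_epi (B0 B) _ _ k).
  { intros z x y Hxy. apply (tens_inj _ _ _ Ht2). apply (He z).
    rewrite <- !key, Hxy. reflexivity. }
  assert (Hsq : m ∘ d2 = d1 ∘ k).
  { apply (tens_inj _ _ _ Ht1). rewrite key, E1, P1, cA', E2. symmetry. exact Hq. }
  destruct (Hl _ _ k Hk d2 d1 Hsq) as [d [[D1 D2] _]].
  exists (postcomp B a2 d ∘ eta2). split.
  - split.
    + rewrite <- cA', <- P1, D2. exact E1.
    + rewrite <- key, D1. exact E2.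
  - intros u' [U1 _]. apply (VMono_of_mono Htens Hm a2).
    rewrite U1, <- cA', <- P1, D2. exact E1.
Qed.
End Enr3.
Set Implicit Arguments.

Section Gen.
Context {C : PreCat} (HC : is_category C).

Lemma gA {a b c d : C} (f : hom a b) (g : hom b c) (h : hom c d) : h ∘ (g ∘ f) = h ∘ g ∘ f.
Proof. apply (proj2 (proj2 HC)). Qed.
Lemma gl {a b : C} (f : hom a b) : idm b ∘ f = f.
Proof. apply (proj1 HC). Qed.
Lemma gr {a b : C} (f : hom a b) : f ∘ idm a = f.
Proof. apply (proj1 (proj2 HC)). Qed.

Definition glifts {a1 a2 b1 b2 : C} (e : hom a1 a2) (m : hom b1 b2) : Prop :=
  forall (u : hom a1 b1) (v : hom a2 b2), m ∘ u = v ∘ e ->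
  exists! d : hom a2 b1, d ∘ e = u /\ m ∘ d = v.

Lemma strong_of {a b : C} (m : hom a b) : is_mono m ->
  (forall (x y : C) (e : hom x y), is_epi e -> forall u v, m ∘ u = v ∘ e ->
      exists d, d ∘ e = u /\ m ∘ d = v) -> is_strong_mono m.
Proof.
  intros Hm Hl. split; [exact Hm|]. intros x y e He u v H.
  destruct (Hl x y e He u v H) as [d [D1 D2]]. exists d. split; [split; assumption|].
  intros d' [D1' D2']. apply Hm. rewrite D2, D2'. reflexivity.
Qed.

Lemma comp_mono {a b c : C} (m2 : hom a b) (m1 : hom b c) : is_mono m1 -> is_mono m2 -> is_mono (m1 ∘ m2).
Proof. intros H1 H2 z g h H. rewrite <- !gA in H. apply H2, H1, H. Qed.

Lemma comp_strong {a b c : C} (m2 : hom a b) (m1 : hom b c) :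
  is_strong_mono m1 -> is_strong_mono m2 -> is_strong_mono (m1 ∘ m2).
Proof.
  intros [H1 L1] [H2 L2]. apply strong_of; [apply comp_mono; assumption|].
  intros x y e He u v H. rewrite <- gA in H.
  destruct (L1 x y e He (m2 ∘ u) v H) as [d1 [[D11 D12] _]].
  destruct (L2 x y e He u d1 (eq_sym D11)) as [d2 [[D21 D22] _]].
  exists d2. split; [exact D21|]. rewrite <- gA, D22. exact D12.
Qed.

Lemma mono_of_lifts (Hpb : has_pullbacks C) {b1 b2 : C} (m : hom b1 b2) :
  (forall (x y : C) (e : hom x y), is_epi e -> glifts e m) -> is_mono m.
Proof.
  intros Hl. destruct (Hpb _ _ _ m m) as [P [p1 [p2 [Hc Hu]]]].
  destruct (Hu b1 (idm b1) (idm b1) eq_refl) as [dl [[Dl1 Dl2] _]].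
  assert (Hp1 : is_epi p1).
  { intros z g h H. rewrite <- (gr g), <- (gr h), <- Dl1, !gA, H. reflexivity. }
  destruct (Hl _ _ p1 Hp1 p2 m (eq_sym Hc)) as [d [[D1 D2] _]].
  assert (Hd : d = idm b1). { rewrite <- (gr d). rewrite <- Dl1 at 1. rewrite gA, D1. exact Dl2. }
  intros z g h H. destruct (Hu z g h H) as [q [[Q1 Q2] _]].
  rewrite <- Q1, <- Q2, <- D1, Hd, gl. reflexivity.
Qed.

Lemma epi_of_lifts {a b : C} (e : hom a b) :
  (forall (a b : C) (f : hom a b), exists (c : C) (e' : hom a c) (m : hom c b),
      is_epi e' /\ is_strong_mono m /\ f = m ∘ e') ->
  (forall (x y : C) (m : hom x y), is_strong_mono m -> glifts e m) -> is_epi e.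
Proof.
  intros Hf Hl. destruct (Hf _ _ e) as [c [e' [m [He' [Hm Hfe]]]]].
  assert (Hsq : m ∘ e' = idm b ∘ e) by (rewrite gl; symmetry; exact Hfe).
  destruct (Hl _ _ m Hm e' (idm b) Hsq) as [d [[D1 D2] _]].
  intros z g h H. rewrite Hfe, !gA in H. apply He' in H.
  rewrite <- (gr g), <- (gr h), <- D2, !gA, H. reflexivity.
Qed.

Lemma equalizers (Hfl : has_finite_limits C) {p z : C} (g h : hom p z) :
  exists (E : C) (k : hom E p), g ∘ k = h ∘ k /\ is_mono k /\
    (forall Q (q : hom Q p), g ∘ q = h ∘ q -> exists u, k ∘ u = q).
Proof.
  destruct Hfl as [[t Ht] Hpb].
  assert (Tu : forall a (f1 f2 : hom a t), f1 = f2).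
  { intros a f1 f2. destruct (Ht a) as [f0 [_ U]]. rewrite <- (U f1 I), <- (U f2 I). reflexivity. }
  destruct (Ht p) as [tp _]. destruct (Ht z) as [tz _].
  destruct (Hpb _ _ _ tp tz) as [P [pi1 [pi2 [_ HP]]]].
  destruct (HP p (idm p) g (Tu _ _ _)) as [sg [[Sg1 Sg2] _]].
  destruct (HP p (idm p) h (Tu _ _ _)) as [sh [[Sh1 Sh2] _]].
  destruct (Hpb _ _ _ sg sh) as [E [k1 [k2 [Hk HE]]]].
  assert (Hk12 : k1 = k2).
  { rewrite <- (gl k1), <- (gl k2), <- Sg1 at 1. rewrite <- Sh1, <- !gA, Hk. reflexivity. }
  exists E, k1. split; [|split].
  - rewrite <- Sg2 at 1. rewrite <- Sh2, <- !gA, Hk, Hk12. reflexivity.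
  - intros w x y H. destruct (HE w (k1 ∘ x) (k2 ∘ x)) as [u0 [_ U]].
    { rewrite !gA, Hk. reflexivity. }
    rewrite <- (U x), <- (U y); [reflexivity| |].
    + split; [symmetry; exact H|]. rewrite <- Hk12, H. reflexivity.
    + split; reflexivity.
  - intros Q q Hq.
    assert (Hs : sg ∘ q = sh ∘ q).
    { destruct (HP Q q (g ∘ q) (Tu _ _ _)) as [s0 [_ U]].
      rewrite <- (U (sg ∘ q)), <- (U (sh ∘ q)); [reflexivity| |].
      - rewrite !gA, Sh1, Sh2, gl. split; [reflexivity|symmetry; exact Hq].
      - rewrite !gA, Sg1, Sg2, gl. split; reflexivity. }
    destruct (HE Q q q Hs) as [u [[U1 _] _]]. exists u. exact U1.
Qed.

Lemma eq_strong {p z E : C} (g h : hom p z) (k : hom E p) :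
  g ∘ k = h ∘ k -> is_mono k ->
  (forall Q (q : hom Q p), g ∘ q = h ∘ q -> exists u, k ∘ u = q) -> is_strong_mono k.
Proof.
  intros Hk Hm Hu. apply strong_of; [exact Hm|]. intros x y e He u v H.
  assert (Hv : g ∘ v = h ∘ v).
  { apply He. rewrite <- !gA, <- H, !gA, Hk. reflexivity. }
  destruct (Hu _ v Hv) as [d Hd]. exists d. split; [|exact Hd].
  apply Hm. rewrite gA, Hd. symmetry. exact H.
Qed.

Lemma inter_strong {I : Type} {a : C} (b : I -> C) (m : forall i, hom (b i) a) (p : C) (pa : hom p a)
  (pi : forall i, hom p (b i)) :
  (forall i, is_strong_mono (m i)) -> @is_intersection C I a b m p pa pi -> is_strong_mono pa.
Proof.
  intros Hs [Hc Hu].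
  assert (Hm : is_mono pa).
  { intros z x y H. destruct (Hu z (pa ∘ x) (fun i => pi i ∘ x)) as [u0 [_ U]].
    { intros i. rewrite gA, Hc. reflexivity. }
    rewrite <- (U x), <- (U y); [reflexivity| |].
    - split; [symmetry; exact H|]. intros i. apply (proj1 (Hs i)). rewrite !gA, !Hc. symmetry. exact H.
    - split; [reflexivity|]. intros i. reflexivity. }
  apply strong_of; [exact Hm|]. intros x y e He u v H.
  assert (HD : forall i, exists d, d ∘ e = pi i ∘ u /\ m i ∘ d = v).
  { intros i. destruct (proj2 (Hs i) x y e He (pi i ∘ u) v) as [d [Dd _]].
    - rewrite gA, Hc. exact H.
    - exists d. exact Dd. }
  pose (dI := fun i => proj1_sig (constructive_indefinite_description _ (HD i))).
  assert (HdI : forall i, dI i ∘ e = pi i ∘ u /\ m i ∘ dI i = v).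
  { intros i. exact (proj2_sig (constructive_indefinite_description _ (HD i))). }
  destruct (Hu y v dI (fun i => proj2 (HdI i))) as [d [[D1 D2] _]].
  exists d. split; [|exact D1]. apply Hm. rewrite gA, D1. symmetry. exact H.
Qed.

Lemma factorization : finitely_well_complete C ->
  forall (a b : C) (f : hom a b), exists (c : C) (e : hom a c) (m : hom c b),
      is_epi e /\ is_strong_mono m /\ f = m ∘ e.
Proof.
  intros [Hfl Hsi] a b f.
  pose (Ix := {c : C & {mm : hom c b & {u : hom a c | is_strong_mono mm /\ mm ∘ u = f}}}).
  pose (bI := fun i : Ix => projT1 i).
  pose (mI := fun i : Ix => projT1 (projT2 i) : hom (bI i) b).
  pose (uI := fun i : Ix => proj1_sig (projT2 (projT2 i)) : hom a (bI i)).
  assert (HmI : forall i, is_strong_mono (mI i)) by (intros i; exact (proj1 (proj2_sig (projT2 (projT2 i))))).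
  assert (HuI : forall i, mI i ∘ uI i = f) by (intros i; exact (proj2 (proj2_sig (projT2 (projT2 i))))).
  destruct (Hsi Ix b bI mI HmI) as [p [pa [pi Hint]]].
  assert (Hpa := inter_strong HmI Hint).
  destruct Hint as [Hc Hu].
  destruct (Hu a f uI HuI) as [u0 [[U1 U2] _]].
  exists p, u0, pa. split; [|split; [exact Hpa | symmetry; exact U1]].
  intros z g h H.
  destruct (equalizers Hfl g h) as [E [k [Hk [Hkm Hku]]]].
  assert (Hks := eq_strong g h Hk Hkm Hku).
  destruct (Hku a u0 H) as [w Hw].
  assert (Hs : is_strong_mono (pa ∘ k)) by (apply comp_strong; assumption).
  assert (Hf : (pa ∘ k) ∘ w = f) by (rewrite <- gA, Hw; exact U1).
  pose (i0 := existT (fun c : C => {mm : hom c b & {u : hom a c | is_strong_mono mm /\ mm ∘ u = f}})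
                E (existT _ (pa ∘ k) (exist _ w (conj Hs Hf))) : Ix).
  assert (Hi0 : pa ∘ (k ∘ pi i0) = pa ∘ idm p) by (rewrite gr, gA; exact (Hc i0)).
  apply (proj1 Hpa) in Hi0.
  rewrite <- (gr g), <- (gr h), <- Hi0, !gA, Hk. reflexivity.
Qed.
End Gen.

Theorem corollary7p6 (W : SMCC) (B : VCat W)
  (Htens : tensored B) (Hcot : cotensored B)
  (Hfwc : finitely_well_complete (B0 B)) :
  (forall (a b : vob B) (f : @hom (B0 B) a b), @VEpi W B a b f <-> @Epi0 W B a b f) /\
  (forall (a b : vob B) (f : @hom (B0 B) a b), @VStrMono W B a b f <-> @StrMono0 W B a b f) /\
  VFactSystem (@VEpi W B) (@VStrMono W B).
Proof.
  assert (HB := B0_cat B).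
  assert (Hfac := factorization HB Hfwc).
  assert (Hpb : has_pullbacks (B0 B)) by exact (proj2 (proj1 Hfwc)).
  assert (P1' : forall (a b : vob B) (f : @hom (B0 B) a b), @VEpi W B a b f <-> @Epi0 W B a b f).
  { intros a b f. split; [apply epi_of_VEpi | apply (VEpi_of_epi Hcot)]. }
  assert (P2' : forall (a b : vob B) (f : @hom (B0 B) a b), @VStrMono W B a b f <-> @StrMono0 W B a b f).
  { intros a b f. split.
    - intros [Hv Ho]. apply strong_of; [exact (mono_of_VMono Hv)|].
      intros x y e He u v H. destruct (orth_lift (Ho x y e (VEpi_of_epi Hcot He)) u v H) as [d [Dd _]].
      exists d. exact Dd.
    - intros Hs. split; [exact (VMono_of_mono Htens (proj1 Hs))|].
      intros a1 a2 e He. exact (orth_of_strong Htens He Hs). }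
  split; [exact P1'|]. split; [exact P2'|].
  split; [|split].
  - intros b1 b2 m. split; [intros [_ H]; exact H|].
    intros H. apply P2'. unfold StrMono0.
    assert (Hm : @is_mono (B0 B) _ _ m).
    { apply (mono_of_lifts HB Hpb). intros x y e He. apply orth_lift. apply H. apply (VEpi_of_epi Hcot He). }
    apply strong_of; [exact Hm|].
    intros x y e He u v Hq. destruct (orth_lift (H x y e (VEpi_of_epi Hcot He)) u v Hq) as [d [Dd _]].
    exists d. exact Dd.
  - intros a1 a2 e. split; [intros He b1 b2 m [_ Hm]; exact (Hm _ _ e He)|].
    intros H. apply (VEpi_of_epi Hcot). apply (epi_of_lifts HB Hfac).
    intros x y m Hm. apply orth_lift. apply H. apply P2'. exact Hm.
  - intros a b f. destruct (Hfac a b f) as [c [e [m [He [Hm Hf]]]]].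
    exists c, e, m. split; [apply P1'; exact He|]. split; [apply P2'; exact Hm| exact Hf].
Qed.
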